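(* Let $G$ be a graph, and suppose $G$ has a proper coloring with $\chi(G)$ color classes $V_1,\ldots,V_{\chi(G)}$, where $V_i=\{v_{i,1},\ldots,v_{i,n(i)}\}$, such that for each color $i$ there is $k(i)\in\{1,\ldots,n(i)\}$ with $N_G(v_{i,1})\supseteq\cdots\supseteq N_G(v_{i,k(i)})$ and $N_G(v_{i,k(i)+1})\subseteq\cdots\subseteq N_G(v_{i,n(i)})$ (when $k(i)=n(i)$ only the first chain is required). Then $\operatorname{box}(G)\le\chi(G)$.
   Context: All graphs are finite, simple and undirected. $N_G(v)$ is the set of neighbors of $v$ in $G$. A box in $\mathbb{R}^k$ is a Cartesian product of $k$ closed intervals of the real line. The boxicity $\operatorname{box}(G)$ is the minimum nonnegative integer $k$ such that $G$ is isomorphic to the intersection graph of a family of boxes in $\mathbb{R}^k$. $\chi(G)$ is the chromatic number of $G$. *)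

(* Defs.v *)
From Stdlib Require Import Reals.
From mathcomp Require Import all_boot.
Set Implicit Arguments. Unset Strict Implicit. Unset Printing Implicit Defensive.

(* A finite simple graph: vertex type T : finType, adjacency e : rel T,
   assumed symmetric and irreflexive (as hypotheses of the theorem). *)

Definition nbhd (T : finType) (e : rel T) (v : T) : {set T} := [set u | e v u].

Definition proper_coloring (T : finType) (e : rel T) (k : nat) (c : T -> 'I_k) : Prop :=
  forall x y, e x y -> c x != c y.

Definition colorableb (T : finType) (e : rel T) (k : nat) : bool :=
  [exists f : {ffun T -> 'I_k}, [forall x, forall y, e x y ==> (f x != f y)]].

Lemma colorable_exists (T : finType) (e : rel T) (irr : irreflexive e) :
  exists k, colorableb e k.
Proof.
exists #|T|; apply/existsP; exists [ffun x => enum_rank x].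
apply/forallP => x; apply/forallP => y; apply/implyP => exy.
rewrite !ffunE; apply/negP => /eqP /enum_rank_inj exy'.
by move: exy; rewrite exy' irr.
Qed.

Definition chi (T : finType) (e : rel T) (irr : irreflexive e) : nat :=
  ex_minn (colorable_exists irr).

Definition is_box (k : nat) (lo hi : nat -> R) : Prop :=
  forall d, (d < k)%N -> Rle (lo d) (hi d).

Definition boxes_meet (k : nat) (lo1 hi1 lo2 hi2 : nat -> R) : Prop :=
  forall d, (d < k)%N -> Rle (lo1 d) (hi2 d) /\ Rle (lo2 d) (hi1 d).

(* G is (isomorphic to) the intersection graph of a family of boxes in R^k,
   the family being indexed by the vertices of G. *)
Definition box_representable (T : finType) (e : rel T) (k : nat) : Prop :=
  exists lo hi : T -> nat -> R,
    (forall v, is_box k (lo v) (hi v)) /\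
    (forall u v, u <> v -> (e u v <-> boxes_meet k (lo u) (hi u) (lo v) (hi v))).

(* Main.v *)
Require Import Defs.
From Stdlib Require Import Reals ZArith Lia ClassicalEpsilon.
From mathcomp Require Import all_boot zify.
Set Implicit Arguments. Unset Strict Implicit.

Definition amax (T : finType) (e : rel T) (s : seq T) (k : nat) (w : T) : nat :=
  \max_(j < size s | (j < k) && e (nth w s j) w) j.+1.
Definition cmax (T : finType) (e : rel T) (s : seq T) (k : nat) (w : T) : nat :=
  \max_(j < size s | (k <= j) && e (nth w s j) w) (size s - j).
Definition pos (T : Type) (s : seq T) (k j : nat) : Z :=
  if j < k then (- (Z.of_nat j + 1))%Z else Z.of_nat (size s - j).

Section K.
Variables (T : finType) (e : rel T) (s : seq T) (k : nat) (w : T).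
Hypothesis H1 : forall v0 j, (j.+1 < k)%N -> nbhd e (nth v0 s j.+1) \subset nbhd e (nth v0 s j).
Hypothesis H2 : forall v0 j, (k <= j)%N -> (j.+1 < size s)%N -> nbhd e (nth v0 s j) \subset nbhd e (nth v0 s j.+1).

Lemma down j j' : j <= j' -> j' < k -> e (nth w s j') w -> e (nth w s j) w.
Proof.
elim: j' => [|j' IH] hjj hk.
  by have -> : j = 0 by lia.
case: (ltnP j'  j) => h.
  by have -> : j = j'.+1 by lia.
move=> he; apply: IH => //; first lia.
by have := subsetP (@H1 w j' hk) w; rewrite !in_set; apply.
Qed.

Lemma up j j' : k <= j -> j <= j' -> j' < size s -> e (nth w s j) w -> e (nth w s j') w.
Proof.
move=> hkj; elim: j' => [|j' IH] hjj hn he.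
  by have <- : j = 0 by lia.
case: (ltnP j' j) => h.
  by have <- : j = j'.+1 by lia.
have := subsetP (@H2 w j' (leq_trans hkj h) hn) w; rewrite !in_set; apply.
apply: IH => //; lia.
Qed.

Lemma key j : j < size s ->
  ((- Z.of_nat (amax e s k w) <= pos s k j)%Z /\ (pos s k j <= Z.of_nat (cmax e s k w))%Z)
  <-> e (nth w s j) w.
Proof.
move=> hj; rewrite /pos; case: ifP => hjk.
- split.
  + move=> [h _]; apply/negPn/negP => hne.
    have : amax e s k w <= j.
      apply/bigmax_leqP => j' /andP [hj'k he'].
      case: (ltnP j' j) => // hl.
      by move: hne; rewrite (down (hl) hj'k he').
    lia.
  + move=> he; split; last lia.
    have hh : j.+1 <= amax e s k w.
      by rewrite /amax; apply: (leq_bigmax_cond (Ordinal hj)); rewrite /= hjk.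
    lia.
- split.
  + move=> [_ h]; apply/negPn/negP => hne.
    have : cmax e s k w <= (size s - j).-1.
      apply/bigmax_leqP => j' /andP [hj'k he'].
      case: (ltnP j j') => hl; first lia.
      have hkj : k <= j' by [].
      by move: hne; rewrite (up hkj hl hj he').
    lia.
  + move=> he; split; first lia.
    have hh : size s - j <= cmax e s k w.
      by rewrite /cmax; apply: (leq_bigmax_cond (Ordinal hj)); rewrite /= he andbT leqNgt hjk.
    lia.
Qed.
End K.

Definition loZ (T : finType) (e : rel T) (s : seq T) (k : nat) (v : T) : Z :=
  if v \in s then pos s k (index v s) else (- Z.of_nat (amax e s k v))%Z.
Definition hiZ (T : finType) (e : rel T) (s : seq T) (k : nat) (v : T) : Z :=
  if v \in s then pos s k (index v s) else Z.of_nat (cmax e s k v).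

Section D.
Variables (T : finType) (e : rel T) (s : seq T) (k : nat).
Hypothesis esym : symmetric e.
Hypothesis H1 : forall v0 j, (j.+1 < k)%N -> nbhd e (nth v0 s j.+1) \subset nbhd e (nth v0 s j).
Hypothesis H2 : forall v0 j, (k <= j)%N -> (j.+1 < size s)%N -> nbhd e (nth v0 s j) \subset nbhd e (nth v0 s j.+1).

Lemma lohi v : (loZ e s k v <= hiZ e s k v)%Z.
Proof. rewrite /loZ /hiZ; case: ifP => _; lia. Qed.

Lemma keyv u w : u \in s ->
  ((- Z.of_nat (amax e s k w) <= pos s k (index u s))%Z /\ (pos s k (index u s) <= Z.of_nat (cmax e s k w))%Z)
  <-> e u w.
Proof.
move=> hu; have hi : index u s < size s by rewrite index_mem.
have := key w H1 H2 hi; rewrite nth_index //.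
Qed.

Lemma dim1 u v : e u v -> ~ (u \in s /\ v \in s) ->
  (loZ e s k u <= hiZ e s k v /\ loZ e s k v <= hiZ e s k u)%Z.
Proof.
move=> huv hn; rewrite /loZ /hiZ.
case hu: (u \in s); case hv: (v \in s).
- by exfalso; apply: hn.
- have := proj2 (keyv v hu) huv; lia.
- rewrite esym in huv; have := proj2 (keyv u hv) huv; lia.
- lia.
Qed.

Lemma posinj i j : i < size s -> j < size s -> pos s k i = pos s k j -> i = j.
Proof. rewrite /pos => hi hj; case: ifP; case: ifP; lia. Qed.

Lemma dim2 u v : u <> v -> u \in s ->
  (loZ e s k u <= hiZ e s k v /\ loZ e s k v <= hiZ e s k u)%Z -> e u v.
Proof.
move=> huv hu; rewrite /loZ /hiZ hu.
case hv: (v \in s) => h.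
- exfalso; apply: huv.
  have hiu : index u s < size s by rewrite index_mem.
  have hiv : index v s < size s by rewrite index_mem hv.
  have hij := posinj hiu hiv (ltac:(lia) : pos s k (index u s) = pos s k (index v s)).
  by rewrite -(nth_index u hu) hij nth_index // hv.
- by apply/(keyv v hu); lia.
Qed.
End D.

Unset Implicit Arguments.

Theorem corollary3p3 (T : finType) (e : rel T)
  (esym : symmetric e) (eirr : irreflexive e)
  (c : T -> 'I_(chi eirr)) (cproper : proper_coloring e c)
  (hchain : forall i : 'I_(chi eirr),
     exists (s : seq T) (k : nat),
       [/\ uniq s, (forall v, v \in s <-> c v = i),
           (1 <= k <= size s)%N,
           (forall (v0 : T) j, (j.+1 < k)%N ->
              nbhd e (nth v0 s j.+1) \subset nbhd e (nth v0 s j)) &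
           (forall (v0 : T) j, (k <= j)%N -> (j.+1 < size s)%N ->
              nbhd e (nth v0 s j) \subset nbhd e (nth v0 s j.+1))]) :
  exists k, (k <= chi eirr)%N /\ box_representable e k.
Proof.
pose Q (i : 'I_(chi eirr)) (p : seq T * nat) :=
   (forall v, v \in p.1 <-> c v = i) /\
   (forall (v0 : T) j, (j.+1 < p.2)%N ->
              nbhd e (nth v0 p.1 j.+1) \subset nbhd e (nth v0 p.1 j)) /\
   (forall (v0 : T) j, (p.2 <= j)%N -> (j.+1 < size p.1)%N ->
              nbhd e (nth v0 p.1 j) \subset nbhd e (nth v0 p.1 j.+1)).
have hc : forall i, exists p, Q i p.
  move=> i; have [s [k [_ h1 _ h2 h3]]] := hchain i.
  by exists (s, k).
pose F i := proj1_sig (constructive_indefinite_description _ (hc i)).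
have HF i : Q i (F i) := proj2_sig (constructive_indefinite_description _ (hc i)).
clearbody F; clear hc hchain.
pose lo v (d : nat) := match insub d : option 'I_(chi eirr) with
  | Some i => IZR (loZ e (F i).1 (F i).2 v) | None => IZR 0 end.
pose hi v (d : nat) := match insub d : option 'I_(chi eirr) with
  | Some i => IZR (hiZ e (F i).1 (F i).2 v) | None => IZR 0 end.
exists (chi eirr); split => //; exists lo, hi; split.
  move=> v d _; rewrite /lo /hi; case: insubP => [i _ _|_]; last by apply: Rle_refl.
  by apply: IZR_le; apply: lohi.
move=> u v huv; split.
- move=> he d hd; rewrite /lo /hi; case: insubP => [i _ hdi|/negP //].
  have [hm [h1 h2]] := HF i.
  have [] := dim1 esym h1 h2 he.
    by move=> [/hm hu /hm hv]; move: (cproper _ _ he); rewrite hu hv eqxx.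
  by move=> ha hb; split; apply: IZR_le.
- move=> hm0.
  have [hm [h1 h2]] := HF (c u).
  have := hm0 (val (c u)) (ltn_ord _).
  rewrite /lo /hi; case: insubP => [i _ /val_inj hdi|]; last by rewrite ltn_ord.
  rewrite hdi => -[ha hb].
  apply: (dim2 (s := (F (c u)).1) (k := (F (c u)).2) h1 h2 huv); first by apply/hm.
  by split; apply: le_IZR.
Qed.
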